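(* Let $\mathfrak{g}$ be a nonzero finite-dimensional complex solvable Lie algebra. Then $\mathfrak{g}$ admits a non-trivial CPA-structure.
   Context: A CPA-structure on a Lie algebra $\mathfrak{g}$ is a bilinear product $x\cdot y$ on $\mathfrak{g}$ satisfying, for all $x,y,z$: $x\cdot y=y\cdot x$; $[x,y]\cdot z=x\cdot(y\cdot z)-y\cdot(x\cdot z)$; $x\cdot[y,z]=[x\cdot y,z]+[y,x\cdot z]$. It is non-trivial if $x\cdot y\neq0$ for some $x,y$. *)

(* Defs.v *)
From HB Require Import structures.
From mathcomp Require Import all_boot all_order all_algebra.
From mathcomp Require Import reals complex.
Set Implicit Arguments. Unset Strict Implicit. Unset Printing Implicit Defensive.
Import GRing.Theory.
Local Open Scope ring_scope.

Definition bilinear_op (F : fieldType) (V : vectType F) (m : V -> V -> V) : Prop :=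
  (forall (a : F) (x y z : V), m (a *: x + y) z = a *: m x z + m y z) /\
  (forall (a : F) (x y z : V), m x (a *: y + z) = a *: m x y + m x z).

Definition lie_bracket (F : fieldType) (V : vectType F) (br : V -> V -> V) : Prop :=
  [/\ bilinear_op br,
      (forall x : V, br x x = 0) &
      (forall x y z : V, br x (br y z) + br y (br z x) + br z (br x y) = 0)].

(* Derived subalgebra [U,U] of a subspace U: the span of all brackets [u,v]
   with u, v in U.  By bilinearity this is the span of the brackets of the
   basis vectors of U. *)
Definition derived_sub (F : fieldType) (V : vectType F) (br : V -> V -> V)
  (U : {vspace V}) : {vspace V} :=
  <<[seq br u v | u <- vbasis U, v <- vbasis U]>>%VS.

Definition derived_series (F : fieldType) (V : vectType F) (br : V -> V -> V)
  (k : nat) : {vspace V} := iter k (derived_sub br) fullv.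

Definition solvable_lie (F : fieldType) (V : vectType F) (br : V -> V -> V) : Prop :=
  exists k : nat, derived_series br k = 0%VS.

Definition CPA_structure (F : fieldType) (V : vectType F) (br : V -> V -> V)
  (p : V -> V -> V) : Prop :=
  [/\ bilinear_op p,
      (forall x y : V, p x y = p y x),
      (forall x y z : V, p (br x y) z = p x (p y z) - p y (p x z)) &
      (forall x y z : V, p x (br y z) = br (p x y) z + br y (p x z))].

Definition nontrivial_product (F : fieldType) (V : vectType F) (p : V -> V -> V) : Prop :=
  exists x y : V, p x y != 0.

(* Main.v *)
From HB Require Import structures.
From mathcomp Require Import all_boot all_order all_algebra.
From mathcomp Require Import reals complex.
From mathcomp Require Import ring.
From Stdlib Require Import Classical.
Require Import Defs.
Import VectorInternalTheory.
Set Implicit Arguments. Unset Strict Implicit. Unset Printing Implicit Defensive.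
Import GRing.Theory Num.Theory.
Local Open Scope ring_scope.


Lemma rV_powE (F : fieldType) r (N : 'M[F]_r) (v : 'rV_r) z m :
  v *m N = z *: v -> v *m N ^+ m = z ^+ m *: v.
Proof.
move=> vN; elim: m => [|m IH]; first by rewrite !expr0 scale1r mulmx1.
by rewrite exprSr -mulmxE mulmxA IH -scalemxAl vN scalerA -exprSr.
Qed.

Lemma tr_nilpotent (F : closedFieldType) r (N : 'M[F]_r) m :
  N ^+ m = 0 -> \tr N = 0.
Proof.
case: r N => [|r] N HN; first by rewrite /mxtrace big_ord0.
suff e : char_poly N = 'X^(r.+1).
  have := char_poly_trace N (ltn0Sn r).
  rewrite e coefXn /= eqn_leq ltnn andbF => /eqP; rewrite eq_sym oppr_eq0.
  by move/eqP.
have [rs Hrs] := closed_field_poly_normal (char_poly N).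
have lc : lead_coef (char_poly N) = 1 by apply/monicP; apply: char_poly_monic.
have H0 z : z \in rs -> z = 0.
  move=> zin; have : root (char_poly N) z.
    by rewrite Hrs lc scale1r root_prod_XsubC.
  rewrite -eigenvalue_root_char => /eigenvalueP [v vN vnz].
  have := rV_powE m vN; rewrite HN mulmx0 => /eqP; rewrite eq_sym scaler_eq0.
  by rewrite (negbTE vnz) orbF expf_eq0 => /andP[_ /eqP].
have e1 : char_poly N = 'X^(size rs).
  rewrite Hrs lc scale1r (eq_big_seq (fun _ => 'X)); last first.
    by move=> z /H0 ->; rewrite subr0.
  by elim: (rs) => [|a s IH]; rewrite ?big_nil ?expr0 // big_cons IH exprS.
have := size_char_poly N; rewrite e1 size_polyXn => -[] ->.
by [].
Qed.

Lemma eigen_stable (F : closedFieldType) n (W A : 'M[F]_n) :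
  W != 0 -> stablemx W A ->
  exists v : 'rV_n, [/\ v != 0, (v <= W)%MS & exists a, v *m A = a *: v].
Proof.
move=> Wnz sWA.
set B := row_base W.
have sBA : stablemx B A by rewrite stablemx_row_base.
set C := conjmx B A.
have : size (char_poly C) != 1%N.
  by rewrite size_char_poly eqSS mxrank_eq0.
case/closed_rootP => a; rewrite -eigenvalue_root_char => /eigenvalueP [u uC unz].
exists (u *m B); split.
- by rewrite mulmx_free_eq0 ?row_base_free.
- by rewrite (submx_trans (submxMl _ _)) // eq_row_base.
- exists a; rewrite -mulmxA -[B *m A](mulmxKpV sBA) mulmxA.
  rewrite -(mulmxA u) -/C (mulmxA u) uC -scalemxAl.
by [].

Qed.


Lemma horner_mx_sum (F : fieldType) n (X : 'M[F]_n.+1) (p : {poly F}) :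
  horner_mx X p = \sum_(i < size p) p`_i *: X ^+ i.
Proof.
rewrite -{1}[p]coefK poly_def rmorph_sum; apply: eq_bigr => i _.
by rewrite -mul_polyC rmorphM /= horner_mx_C rmorphXn /= horner_mx_X -mulmxE mul_scalar_mx.
Qed.


Lemma key_lemma (F : numClosedFieldType) n (w : 'rV[F]_n) (X : 'M_n)
  (P : 'M_n -> Prop) (mu : 'M_n -> F) :
  w != 0 -> (forall Y, P Y -> w *m Y = mu Y *: w) ->
  (forall Y, P Y -> P (X *m Y - Y *m X)) ->
  forall Y, P Y -> mu (X *m Y - Y *m X) = 0.
Proof.
case: n w X P mu => [|n] w X P mu wnz weig Pcl.
  by rewrite thinmx0 eqxx in wnz.
have mulE (A B : 'M[F]_n.+1) : A * B = A *m B by [].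
pose Km k := \matrix_(j < k) (w *m X ^+ j).
have Kmem j k : (j < k)%N -> (w *m X ^+ j <= Km k)%MS.
  by move=> jk; apply: (eq_row_sub (Ordinal jk)); rewrite rowK.
have KS i j : (i <= j)%N -> (Km i <= Km j)%MS.
  move=> ij; apply/row_subP => l; rewrite rowK; apply: Kmem.
  exact: leq_trans (ltn_ord l) ij.
have KX k v : (v <= Km k)%MS -> (v *m X <= Km k.+1)%MS.
  move=> vk; apply: submx_trans (submxMr _ vk) _.
  apply/row_subP => l; rewrite row_mul rowK -mulmxA -[X ^+ l *m X]/(X ^+ l * X) -exprSr.
  by apply: Kmem; rewrite ltnS.
have filt i : forall Y, P Y -> (w *m X ^+ i *m (Y - (mu Y)%:M) <= Km i)%MS.
  elim: i => [|i IH] Y PY.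
    by rewrite expr0 mulmx1 mulmxBr weig // mul_mx_scalar subrr sub0mx.
  set Z := X *m Y - Y *m X.
  have PZ := Pcl Y PY.
  have -> : w *m X ^+ i.+1 *m (Y - (mu Y)%:M) =
     w *m X ^+ i *m (Z - (mu Z)%:M) + mu Z *: (w *m X ^+ i)
     + w *m X ^+ i *m (Y - (mu Y)%:M) *m X.
    rewrite /Z exprSr -mulmxE !mulmxBr !mulmxBl !mulmxA !mul_mx_scalar.
    by rewrite -scalemxAl subrK addrA subrK.
  rewrite addmx_sub // ?addmx_sub //.
  - exact: submx_trans (IH _ PZ) (KS _ _ (leqnSn i)).
  - by rewrite scalemx_sub // Kmem.
  - exact: KX (IH _ PY).
set K := Km n.+1.
have KXs : (K *m X <= K)%MS.
  apply/row_subP => l; rewrite row_mul rowK -mulmxA.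
  rewrite -[X ^+ l *m X]/(X ^+ l * X) -exprSr.
  case: (ltnP l.+1 n.+1) => hl; first exact: Kmem.
  have el : l = n :> nat.
    by apply/eqP; rewrite eqn_leq -ltnS ltn_ord -ltnS hl.
  rewrite el.
  have c1 : (char_poly X)`_n.+1 = 1.
    by have := char_poly_monic X; rewrite monicE lead_coefE size_char_poly => /eqP.
  have := Cayley_Hamilton X; rewrite horner_mx_sum size_char_poly big_ord_recr /=.
  rewrite c1 scale1r addrC => /eqP; rewrite addr_eq0 => /eqP ->.
  rewrite mulmxN -scaleN1r scalemx_sub // mulmx_sumr summx_sub // => i _.
  by rewrite -scalemxAr scalemx_sub // Kmem.
have KY Y : P Y -> (K *m Y <= K)%MS.
  move=> PY; apply/row_subP => l; rewrite row_mul rowK.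
  have -> : w *m X ^+ l *m Y =
     w *m X ^+ l *m (Y - (mu Y)%:M) + mu Y *: (w *m X ^+ l).
    by rewrite mulmxBr mul_mx_scalar subrK.
  rewrite addmx_sub // ?scalemx_sub ?Kmem //.
  exact: submx_trans (filt l Y PY) (KS _ _ (ltnW (ltn_ord l))).
have nil Y : P Y -> forall i, Km i *m (Y - (mu Y)%:M) ^+ i = 0.
  move=> PY; elim=> [|i IH]; first by rewrite [Km 0]flatmx0 mul0mx.
  have : (Km i.+1 *m (Y - (mu Y)%:M) <= Km i)%MS.
    apply/row_subP => l; rewrite row_mul rowK.
    by apply: submx_trans (filt l Y PY) (KS _ _ _); rewrite -ltnS ltn_ord.
  by case/submxP => D eD; rewrite exprS mulE mulmxA eD -mulmxA IH mulmx0.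
have Kw : (w <= K)%MS.
  by have := Kmem 0%N n.+1 (ltn0Sn n); rewrite expr0 mulmx1.
set B := row_base K.
have rfB := row_base_free K.
have BK : (B <= K)%MS by rewrite eq_row_base.
have sB M : (K *m M <= K)%MS -> stablemx B M.
  by move=> h; rewrite stablemx_row_base.
have rpos : (0 < \rank K)%N.
  rewrite lt0n mxrank_eq0; apply: contra wnz => /eqP K0.
  by have := Kw; rewrite K0 submx0.
have trY Y : P Y -> \tr (conjmx B Y) = mu Y *+ \rank K.
  move=> PY; set N := Y - (mu Y)%:M.
  have sN : stablemx B N by rewrite /N stablemxD ?stablemxN ?stablemxC ?sB ?KY.
  have sNk k : stablemx B (N ^+ k).
    elim: k => [|k IH]; first by rewrite expr0 stablemxC.
    by rewrite exprS stablemxM.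
  have pw k : (conjmx B N) ^+ k = conjmx B (N ^+ k).
    elim: k => [|k IH]; first by rewrite !expr0 conjmx_scalar.
    rewrite !exprS IH.
    change (conjmx B N *m conjmx B (N ^+ k) = conjmx B (N *m N ^+ k)).
    by rewrite conjmxM ?inE.
  have : \tr (conjmx B N) = 0.
    apply: (@tr_nilpotent _ _ _ n.+1); rewrite pw /conjmx.
    case/submxP: BK => D eB.
    by rewrite {1}eB -(mulmxA D) (nil Y PY) mulmx0 mul0mx.
  have -> : conjmx B N = conjmx B Y - (mu Y)%:M.
    rewrite /conjmx /N mulmxBr mulmxBl.
    by rewrite -[B *m (mu Y)%:M *m pinvmx B]/(conjmx B (mu Y)%:M) conjmx_scalar.
  by rewrite raddfB /= mxtrace_scalar => /eqP; rewrite subr_eq0 => /eqP.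
have trZ Y : P Y -> \tr (conjmx B (X *m Y - Y *m X)) = 0.
  move=> PY; rewrite /conjmx mulmxBr mulmxBl.
  rewrite -[B *m (X *m Y) *m pinvmx B]/(conjmx B (X *m Y)).
  rewrite -[B *m (Y *m X) *m pinvmx B]/(conjmx B (Y *m X)).
  rewrite !conjmxM ?inE ?sB ?KXs ?(KY _ PY) //.
  by rewrite raddfB /= mxtrace_mulC subrr.
move=> Y PY; have := trY _ (Pcl Y PY); rewrite trZ // => /esym/eqP.
by rewrite mulrn_eq0 eqn0Ngt rpos /= => /eqP.
Qed.


Lemma lin_sum (F : fieldType) (U W : lmodType F) (f : U -> W) :
  (forall a u v, f (a *: u + v) = a *: f u + f v) ->
  forall I (r : seq I) (P : pred I) (c : I -> F) (g : I -> U),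
  f (\sum_(i <- r | P i) c i *: g i) = \sum_(i <- r | P i) c i *: f (g i).
Proof.
move=> fl I r P c g.
have f0 : f 0 = 0.
  have := fl 1 0 0; rewrite !scale1r addr0 => /(congr1 (fun t => t - f 0)).
  by rewrite subrr addrK => /esym.
elim/big_rec2: _ => [//|i y1 y2 _ <-].
by rewrite fl.
Qed.

Definition adm (F : fieldType) (V : vectType F) (br : V -> V -> V) (x : V)
  : 'M[F]_(dim V) := lin1_mx (fun r => v2r (br x (r2v r))).

Lemma admE (F : fieldType) (V : vectType F) (br : V -> V -> V) :
  bilinear_op br -> forall x r, r *m adm br x = v2r (br x (r2v r)).
Proof.
move=> [_ blr] x r.
rewrite [r in RHS]row_sum_delta linear_sum.
under eq_bigr => i _ do rewrite linearZ /=.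
rewrite (lin_sum (f := fun v => br x v)); last by move=> a u v; rewrite blr.
rewrite linear_sum; apply/rowP => j.
rewrite /adm mxE summxE; apply: eq_bigr => i _.
by rewrite linearZ !mxE.
Qed.

Lemma admvE (F : fieldType) (V : vectType F) (br : V -> V -> V) :
  bilinear_op br -> forall x v, v2r v *m adm br x = v2r (br x v).
Proof. by move=> bl x v; rewrite admE // v2rK. Qed.

Lemma mx_ext (F : fieldType) n (A B : 'M[F]_n) :
  (forall r : 'rV_n, r *m A = r *m B) -> A = B.
Proof.
move=> h; apply/row_matrixP => i.
by rewrite -[A]mul1mx -[B]mul1mx !row_mul h.
Qed.

Lemma adm_lin (F : fieldType) (V : vectType F) (br : V -> V -> V) :
  bilinear_op br -> forall a x y, adm br (a *: x + y) = a *: adm br x + adm br y.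
Proof.
move=> bl a x y; apply: mx_ext => r.
rewrite mulmxDr -scalemxAr !admE //.
case: bl => bll _; have := bll a x y (r2v r) => /(congr1 v2r) ->.
by rewrite linearD linearZ.
Qed.


Lemma blDl (F : fieldType) (V : vectType F) (m : V -> V -> V) :
  bilinear_op m -> forall x y z, m (x + y) z = m x z + m y z.
Proof. by case=> bll _ x y z; have := bll 1 x y z; rewrite !scale1r. Qed.

Lemma blDr (F : fieldType) (V : vectType F) (m : V -> V -> V) :
  bilinear_op m -> forall x y z, m x (y + z) = m x y + m x z.
Proof. by case=> _ blr x y z; have := blr 1 x y z; rewrite !scale1r. Qed.

Lemma bl0l (F : fieldType) (V : vectType F) (m : V -> V -> V) :
  bilinear_op m -> forall z, m 0 z = 0.
Proof.
move=> bl z; have := blDl bl 0 0 z; rewrite addr0 => /(congr1 (fun t => t - m 0 z)).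
by rewrite subrr addrK => /esym.
Qed.

Lemma bl0r (F : fieldType) (V : vectType F) (m : V -> V -> V) :
  bilinear_op m -> forall z, m z 0 = 0.
Proof.
move=> bl z; have := blDr bl z 0 0; rewrite addr0 => /(congr1 (fun t => t - m z 0)).
by rewrite subrr addrK => /esym.
Qed.

Lemma blZl (F : fieldType) (V : vectType F) (m : V -> V -> V) :
  bilinear_op m -> forall a x z, m (a *: x) z = a *: m x z.
Proof.
move=> bl a x z; case: (bl) => bll _; have := bll a x 0 z.
by rewrite addr0 (bl0l bl) addr0.
Qed.

Lemma blZr (F : fieldType) (V : vectType F) (m : V -> V -> V) :
  bilinear_op m -> forall a x z, m z (a *: x) = a *: m z x.
Proof.
move=> bl a x z; case: (bl) => _ blr; have := blr a z x 0.
by rewrite addr0 (bl0r bl) addr0.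
Qed.

Lemma blNl (F : fieldType) (V : vectType F) (m : V -> V -> V) :
  bilinear_op m -> forall x z, m (- x) z = - m x z.
Proof. by move=> bl x z; rewrite -scaleN1r (blZl bl) scaleN1r. Qed.

Lemma blNr (F : fieldType) (V : vectType F) (m : V -> V -> V) :
  bilinear_op m -> forall x z, m z (- x) = - m z x.
Proof. by move=> bl x z; rewrite -scaleN1r (blZr bl) scaleN1r. Qed.

Lemma br_anti (F : fieldType) (V : vectType F) (br : V -> V -> V) :
  lie_bracket br -> forall x y, br x y = - br y x.
Proof.
case=> bl alt _ x y.
have := alt (x + y).
rewrite (blDl bl) !(blDr bl) !alt add0r addr0 => /eqP; rewrite addr_eq0 => /eqP.
by [].
Qed.

Lemma br_jac (F : fieldType) (V : vectType F) (br : V -> V -> V) :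
  lie_bracket br -> forall x y v, br (br x y) v = br x (br y v) - br y (br x v).
Proof.
move=> lb x y v; have lb' := lb; case: lb' => bl alt jac.
have h : br v (br x y) = - (br x (br y v) + br y (br v x)).
  by apply/eqP; rewrite -addr_eq0 addrC jac.
by rewrite (br_anti lb (br x y) v) h opprK (br_anti lb v x) (blNr bl).
Qed.

Lemma adm_br (F : fieldType) (V : vectType F) (br : V -> V -> V) :
  lie_bracket br -> forall x y,
  adm br (br x y) = adm br y *m adm br x - adm br x *m adm br y.
Proof.
move=> lb x y; have lb' := lb; case: lb' => bl _ _.
apply: mx_ext => r; rewrite mulmxBr !mulmxA !admE // !v2rK.
by rewrite -linearB br_jac.
Qed.


Lemma ds_mem (F : fieldType) (V : vectType F) (br : V -> V -> V) :
  bilinear_op br -> forall (U : {vspace V}) u v, u \in U -> v \in U ->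
  br u v \in derived_sub br U.
Proof.
move=> bl U u v uU vU; have bl' := bl; case: bl' => bll blr.
rewrite (coord_vbasis uU) (lin_sum (f := fun t => br t v)); last first.
  by move=> a s t; rewrite bll.
apply: rpred_sum => i _; apply: rpredZ.
rewrite (coord_vbasis vU) (lin_sum (f := fun t => br _ t)); last first.
  by move=> a s t; rewrite blr.
apply: rpred_sum => j _; apply: rpredZ.
apply: memv_span; apply: allpairs_f; apply: mem_nth; by rewrite size_tuple.
Qed.

Lemma ds_sub (F : fieldType) (V : vectType F) (br : V -> V -> V)
  (U S : {vspace V}) :
  (forall b1 b2, b1 \in U -> b2 \in U -> br b1 b2 \in S) ->
  (derived_sub br U <= S)%VS.
Proof.
move=> h; apply/span_subvP => z /allpairsP [[b1 b2] [/= h1 h2 ->]].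
by apply: h; apply: vbasis_mem.
Qed.

Lemma ds_mono (F : fieldType) (V : vectType F) (br : V -> V -> V) :
  bilinear_op br -> forall U1 U2 : {vspace V}, (U1 <= U2)%VS ->
  (derived_sub br U1 <= derived_sub br U2)%VS.
Proof.
move=> bl U1 U2 /subvP s12; apply: ds_sub => b1 b2 h1 h2.
by apply: ds_mem => //; apply: s12.
Qed.

Lemma ds_iter_mono (F : fieldType) (V : vectType F) (br : V -> V -> V) :
  bilinear_op br -> forall j (U1 U2 : {vspace V}), (U1 <= U2)%VS ->
  (iter j (derived_sub br) U1 <= iter j (derived_sub br) U2)%VS.
Proof.
move=> bl j U1 U2 s12; elim: j => [//|j IH] /=.
exact: ds_mono.
Qed.


Lemma adm0 (F : fieldType) (V : vectType F) (br : V -> V -> V) :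
  bilinear_op br -> adm br 0 = 0.
Proof.
move=> bl; apply: mx_ext => r; rewrite admE // (bl0l bl) linear0 mulmx0.
by [].
Qed.

Lemma lie_thm (F : numClosedFieldType) (V : vectType F) (br : V -> V -> V) :
  lie_bracket br ->
  forall k (U : {vspace V}), (\dim U <= k)%N ->
  (forall u v, u \in U -> v \in U -> br u v \in U) ->
  (exists j, iter j (derived_sub br) U = 0%VS) ->
  forall W : 'M[F]_(dim V), W != 0 ->
  (forall u, u \in U -> stablemx W (adm br u)) ->
  exists w : 'rV[F]_(dim V), [/\ w != 0, (w <= W)%MS &
     forall u, u \in U -> exists c, w *m adm br u = c *: w].
Proof.
move=> lb; have lb' := lb; case: lb' => bl alt jac.
have base (U : {vspace V}) : U = 0%VS -> forall W : 'M[F]_(dim V), W != 0 ->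
  exists w : 'rV[F]_(dim V), [/\ w != 0, (w <= W)%MS &
     forall u, u \in U -> exists c, w *m adm br u = c *: w].
  move=> -> W Wnz; exists (nz_row W); split.
  - by rewrite nz_row_eq0.
  - exact: nz_row_sub.
  - move=> u; rewrite memv0 => /eqP ->; exists 0.
    by rewrite scale0r adm0 // mulmx0.
elim=> [|k IHk] U dimU subU [j solU] W Wnz stW.
  by apply: base => //; apply/eqP; rewrite -dimv_eq0 -leqn0.
have [U0|Unz] := eqVneq U 0%VS; first exact: base.
set D := derived_sub br U.
have DU : (D <= U)%VS by apply: ds_sub.
have nUD : ~~ (U <= D)%VS.
  apply/negP => UD; move/negP: Unz; apply.
  have : (U <= iter j (derived_sub br) U)%VS.
    elim: (j) => [|i IH] /=; first exact: subvv.
    exact: subv_trans UD (ds_mono bl IH).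
  by rewrite solU subv0.
have [e eU eD] := subvPn nUD.
set C := (U :\: (D + <[e]>))%VS.
set n' := (D + C)%VS.
have n'U : (n' <= U)%VS by rewrite subv_add DU diffvSl.
have Dn' : (D <= n')%VS := addvSl D C.
have en' : e \notin n'.
  apply/negP => /memv_addP [d dD [c cC ede]].
  have : c \in (C :&: (D + <[e]>))%VS.
    rewrite memv_cap cC /=.
    have -> : c = e - d by rewrite ede [d + c]addrC addrK.
    apply: memvB; last by apply: (subvP (addvSl D <[e]>)).
    by apply: (subvP (addvSr D <[e]>)); apply: memv_line.
  rewrite capv_diff memv0 => /eqP c0.
  by move: eD; rewrite ede c0 addr0 dD.
have dim_lt : (\dim n' < \dim U)%N.
  rewrite (ltn_leqif (dimv_leqif_eq n'U)); apply: contraNneq en' => ->.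
  exact: eU.
have Udec u : u \in U -> exists2 y, y \in n' & exists c, u = y + c *: e.
  move=> uU; have : u \in (C + U :&: (D + <[e]>))%VS by rewrite addv_diff_cap.
  case/memv_addP => c cC [t /memv_capP [_ /memv_addP [d dD [s /vlineP [a ->] ->]]] ->].
  exists (d + c); first by apply: memv_add.
  by exists a; rewrite addrCA addrA.
have subn' u v : u \in n' -> v \in n' -> br u v \in n'.
  move=> un vn; apply: (subvP Dn'); apply: ds_mem => //.
  - exact: (subvP n'U).
  - exact: (subvP n'U).
have soln' : exists j, iter j (derived_sub br) n' = 0%VS.
  by exists j; apply/eqP; rewrite -subv0 -solU; apply: ds_iter_mono.
have dimn' : (\dim n' <= k)%N by rewrite -ltnS (leq_trans dim_lt dimU).
have [w0 [w0nz w0W w0eig]] := IHk n' dimn' subn' soln' W Wnz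
   (fun u un => stW u (subvP n'U u un)).
have [i0 i0nz] : exists i, w0 0 i != 0.
  apply/existsP; apply: contraR w0nz => /existsPn h; apply/eqP/rowP => i.
  by move: (h i); rewrite negbK mxE => /eqP.
pose mu (M : 'M[F]_(dim V)) := (w0 *m M) 0 i0 / w0 0 i0.
have mueig y : y \in n' -> w0 *m adm br y = mu (adm br y) *: w0.
  move=> yn; have [c hc] := w0eig y yn.
  by rewrite /mu hc mxE mulfK.
pose b := vbasis n'.
have bn (i : 'I_(\dim n')) : b`_i \in n'.
  by apply: vbasis_mem; apply: mem_nth; rewrite size_tuple.
pose W' := (W :&: \bigcap_(i < \dim n')
              kermx (adm br b`_i - (mu (adm br b`_i))%:M))%MS.
have inW' (v : 'rV[F]_(dim V)) : (v <= W)%MS ->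
    (forall y, y \in n' -> v *m adm br y = mu (adm br y) *: v) -> (v <= W')%MS.
  move=> vW ve; rewrite sub_capmx vW /=; apply/sub_bigcapmxP => i _.
  by rewrite sub_kermx mulmxBr ve ?mul_mx_scalar ?subrr.
have eigsum (v : 'rV[F]_(dim V)) :
    (forall i : 'I_(\dim n'), v *m adm br b`_i = mu (adm br b`_i) *: v) ->
    forall y, y \in n' ->
    v *m adm br y = (\sum_i coord b i y * mu (adm br b`_i)) *: v.
  move=> h y yn; rewrite {1}(coord_vbasis yn).
  rewrite (lin_sum (f := adm br)); last by move=> a s t; rewrite adm_lin.
  rewrite mulmx_sumr scaler_suml; apply: eq_bigr => i _.
  by rewrite -scalemxAr h scalerA.
have outW' (v : 'rV[F]_(dim V)) : (v <= W')%MS -> (v <= W)%MS /\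
    forall y, y \in n' -> v *m adm br y = mu (adm br y) *: v.
  rewrite sub_capmx => /andP [vW /sub_bigcapmxP vK]; split => // y yn.
  have hv (i : 'I_(\dim n')) : v *m adm br b`_i = mu (adm br b`_i) *: v.
    by have := vK i isT; rewrite sub_kermx mulmxBr mul_mx_scalar subr_eq0 => /eqP.
  have hw (i : 'I_(\dim n')) : w0 *m adm br b`_i = mu (adm br b`_i) *: w0.
    exact: mueig.
  rewrite (eigsum v hv y yn); congr (_ *: _).
  have := eigsum w0 hw y yn; rewrite mueig // => /eqP.
  rewrite -subr_eq0 -scalerBl scaler_eq0 (negbTE w0nz) orbF subr_eq0 => /eqP.
  by move=> ->.
have W'nz : W' != 0.
  apply: contraNneq w0nz => W'0; have := inW' w0 w0W mueig.
  by rewrite W'0 submx0.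
have stW' x : x \in U -> stablemx W' (adm br x).
  move=> xU; apply/row_subP => l; rewrite row_mul.
  have [rW rE] := outW' _ (row_sub l W').
  apply: inW'; first by rewrite (submx_trans (submxMr _ rW)) // stW.
  move=> y yn.
  have key := @key_lemma F (dim V) w0 (adm br x)
    (fun M => exists2 z, z \in n' & M = adm br z) mu w0nz.
  have h0 : 0 = mu (adm br x *m adm br y - adm br y *m adm br x).
    apply/esym; apply: key.
    - by move=> M [z zn ->]; apply: mueig.
    - move=> M [z zn ->]; exists (br z x); last by rewrite adm_br.
      apply: (subvP Dn'); apply: ds_mem => //; exact: (subvP n'U).
    - by exists y.
  rewrite -mulmxA.
  have -> : adm br x *m adm br y = adm br y *m adm br x +
     (adm br x *m adm br y - adm br y *m adm br x) by rewrite addrC subrK.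
  rewrite mulmxDr mulmxA rE // -scalemxAl -adm_br // (rE (br y x)); last first.
    apply: (subvP Dn'); apply: ds_mem => //; exact: (subvP n'U).
  by rewrite adm_br // -h0 scale0r addr0.
have [v [vnz vW' [a va]]] := eigen_stable W'nz (stW' e eU).
exists v; split => //; first by have [] := outW' v vW'.
move=> u uU; have [y yn [c ->]] := Udec u uU.
exists (mu (adm br y) + c * a).
rewrite addrC adm_lin // mulmxDr -scalemxAr va ((outW' v vW').2 y yn).
by rewrite scalerA scalerDl addrC.
Qed.


Lemma scal_inj (F : fieldType) (V : vectType F) (z : V) (a b : F) :
  z != 0 -> a *: z = b *: z -> a = b.
Proof.
move=> znz /eqP; rewrite -subr_eq0 -scalerBl scaler_eq0 (negbTE znz) orbF.
by rewrite subr_eq0 => /eqP.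
Qed.

Lemma cpa_of (F : fieldType) (V : vectType F) (br : V -> V -> V)
  (phi : V -> F) (z0 : V) (kap : F) :
  lie_bracket br ->
  (forall a x y, phi (a *: x + y) = a * phi x + phi y) ->
  (forall x y, phi (br x y) = 0) ->
  (forall w, br w z0 = (kap * phi w) *: z0) ->
  CPA_structure br (fun x y => (phi x * phi y) *: z0).
Proof.
move=> lb phil phib hz; have lb' := lb; case: lb' => bl alt jac.
have phi0 : phi 0 = 0.
  have := phil 1 0 0; rewrite scale1r addr0 mul1r.
  by move/(congr1 (fun t => t - phi 0)); rewrite subrr addrK => /esym.
have phiZ a x : phi (a *: x) = a * phi x.
  by have := phil a x 0; rewrite addr0 phi0 addr0.
split.
- split => a x y z /=.
    by rewrite phil !scalerA -scalerDl; congr (_ *: _); ring.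
  by rewrite phil !scalerA -scalerDl; congr (_ *: _); ring.
- by move=> x y /=; rewrite mulrC.
- move=> x y z /=; rewrite phib mul0r scale0r !phiZ.
  rewrite -scalerBl; apply/esym; apply/eqP; rewrite scaler_eq0; apply/orP; left.
  by apply/eqP; ring.
- move=> x y z /=; rewrite phib mulr0 scale0r (blZl bl) (blZr bl) (br_anti lb z0 z).
  rewrite !hz scalerN !scalerA -scaleNr -scalerDl.
  apply/esym; apply/eqP; rewrite scaler_eq0; apply/orP; left.
  by apply/eqP; ring.
Qed.

Theorem corollary3p9 (R : realType) (V : vectType R[i]) (br : V -> V -> V) :
  lie_bracket br -> solvable_lie br -> (0 < \dim (fullv : {vspace V}))%N ->
  exists p : V -> V -> V, CPA_structure br p /\ nontrivial_product p.
Proof.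
move=> lb [j solj] dimpos; rewrite /derived_series in solj; have lb' := lb; case: lb' => bl alt jac.
have W1nz : (1%:M : 'M[R[i]]_(dim V)) != 0.
  by rewrite -mxrank_eq0 mxrank1 -dimvf -lt0n.
have [w [wnz _ weig]] := @lie_thm _ _ br lb (\dim (fullv : {vspace V})) fullv
  (leqnn _) (fun u v _ _ => memvf _) (ex_intro _ j solj) _ W1nz
  (fun u _ => submx1 _).
have [i0 i0nz] : exists i, w 0 i != 0.
  apply/existsP; apply: contraR wnz => /existsPn h; apply/eqP/rowP => i.
  by move: (h i); rewrite negbK mxE => /eqP.
pose lam u := (w *m adm br u) 0 i0 / w 0 i0.
have weig' u : w *m adm br u = lam u *: w.
  have [c hc] := weig u (memvf u).
  by rewrite /lam hc mxE mulfK.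
set z0 := r2v w.
have z0nz : z0 != 0.
  by apply: contraNneq wnz => h; rewrite -[w]r2vK -/z0 h linear0.
have hz u : br u z0 = lam u *: z0.
  by apply: v2r_inj; rewrite -admvE // /z0 r2vK weig' linearZ /= r2vK.
have nontriv (phi : V -> R[i]) x0 : phi x0 != 0 ->
    nontrivial_product (fun x y => (phi x * phi y) *: z0).
  move=> h; exists x0, x0; rewrite scaler_eq0 negb_or z0nz andbT.
  by rewrite mulf_neq0.
case: (classic (exists x0, lam x0 != 0)) => [[x0 hx0] | hno].
  have laml a x y : lam (a *: x + y) = a * lam x + lam y.
    apply: (scal_inj z0nz); rewrite -hz.
    by case: bl => bll _; rewrite bll !hz scalerDl scalerA.
  have lamb x y : lam (br x y) = 0.
    apply: (scal_inj z0nz); rewrite -hz br_jac // !hz (blZr bl) (blZr bl).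
    by rewrite !hz !scalerA mulrC subrr scale0r.
  exists (fun x y => (lam x * lam y) *: z0); split; last exact: nontriv hx0.
  apply: (cpa_of (kap := 1)) => // u; by rewrite mul1r hz.
have lam0 x : lam x = 0.
  by apply/eqP; apply/negPn/negP => h; apply: hno; exists x.
set D := derived_sub br fullv.
have nfD : ~~ (fullv <= D)%VS.
  apply/negP => fD.
  have : ((fullv : {vspace V}) <= iter j (derived_sub br) fullv)%VS.
    elim: (j) => [|i IH] /=; first exact: subvv.
    exact: subv_trans fD (ds_mono bl IH).
  rewrite solj subv0 => /eqP f0.
  by move: dimpos; rewrite f0 dimv0.
have [e _ eD] := subvPn nfD.
pose g (v : V) := v - projv D v.
have gnz : v2r (g e) != 0.
  apply: contra eD => /eqP h.
  have : g e = 0 by apply: v2r_inj; rewrite h linear0.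
  by move/eqP; rewrite subr_eq0 => /eqP ->; apply: memv_proj.
have [j0 j0nz] : exists j0, v2r (g e) 0 j0 != 0.
  apply/existsP; apply: contraR gnz => /existsPn h; apply/eqP/rowP => i.
  by move: (h i); rewrite negbK mxE => /eqP.
pose phi v := v2r (g v) 0 j0.
have gl a x y : g (a *: x + y) = a *: g x + g y.
  by rewrite /g linearP scalerBr opprD addrACA.
have phil a x y : phi (a *: x + y) = a * phi x + phi y.
  by rewrite /phi gl linearP /= !mxE.
have phib x y : phi (br x y) = 0.
  rewrite /phi /g projv_id ?subrr ?linear0 ?mxE //.
  by apply: ds_mem; rewrite ?memvf.
exists (fun x y => (phi x * phi y) *: z0); split; last exact: nontriv j0nz.
apply: (cpa_of (kap := 0)) => // u; by rewrite mul0r hz lam0 scale0r.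
Qed.
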